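(* Let $d$ be even and $n\ge d+1$. Then: (i) if $n=d+1$, $C^d_n=A_n$; (ii) if $n=d+2$ and $\frac d2$ is even, $C^d_n=(A_n\cap(S_{n/2}\times S_{n/2}))\rtimes\langle s\rangle$; (iii) if $n=d+2$ and $\frac d2$ is odd, $C^d_n=\ker\phi$, where $\phi:(S_{n/2}\times S_{n/2})\rtimes\langle s\rangle\to\{-1,1\}$ is given by $\phi((\omega,\pi)s^{\varepsilon})=\operatorname{sgn}(\omega)\operatorname{sgn}(\pi)(-1)^{\varepsilon}$; (iv) if $n\ge d+3$ and $\frac d2$ is even, $C^d_n$ is isomorphic to the dihedral group $\mathbb D_n$ of order $2n$; (v) if $n\ge d+3$ and $\frac d2$ is odd, $C^d_n\cong\mathbb Z/n$.
   Context: For $n\ge d+1$, let $C^d_n\subseteq S_n$ be the subgroup of permutations $\sigma$ with the following property: for all $x_1,\dots,x_n\in\mathbb R^d$ such that the $(d+1)\times n$ matrix with columns $\binom{1}{x_1},\dots,\binom{1}{x_n}$ has all maximal minors positive, the matrix with columns $\binom{1}{x_{\sigma(1)}},\dots,\binom{1}{x_{\sigma(n)}}$ also has all maximal minors positive. $A_n$ is the alternating group. For even $n$: - $S_{n/2}\times S_{n/2}\subseteq S_n$ is the subgroup of permutations that map even indices to even indices and odd indices to odd indices. Its elements are written $(\omega,\pi)$, where $\omega$ permutes the even indices and $\pi$ the odd ones. - $s\in S_n$ is the order-reversing permutation $i\mapsto n+1-i$. - $(S_{n/2}\times S_{n/2})\rtimes\langle s\rangle$ is the subgroup of $S_n$ they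 generate; every element is uniquely of the form $(\omega,\pi)s^{\varepsilon}$ with $\varepsilon\in\{0,1\}$. *)

(* Defs.v *)
From HB Require Import structures.
From mathcomp Require Import all_boot all_order all_algebra all_fingroup all_solvable.
From mathcomp Require Import boolp reals.
Set Implicit Arguments. Unset Strict Implicit. Unset Printing Implicit Defensive.
Import Order.TTheory GRing.Theory Num.Theory.
Local Open Scope ring_scope.

(* The (d+1) x n matrix with columns (1; x_j), for x : 'M_(d, n) (column j = x_j). *)
Definition augmented (R : nzRingType) (d n : nat) (x : 'M[R]_(d, n)) : 'M[R]_(d.+1, n) :=
  col_mx (const_mx 1 : 'M[R]_(1, n)) x.

Definition all_max_minors_pos (R : realDomainType) (m n : nat) (M : 'M[R]_(m, n)) : Prop :=
  forall f : 'I_m -> 'I_n, (forall i j : 'I_m, (i < j)%N -> (f i < f j)%N) ->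
    0 < \det (colsub f M).

Definition permute_cols (R : nzRingType) (d n : nat) (sigma : 'S_n) (x : 'M[R]_(d, n))
  : 'M[R]_(d, n) := colsub (fun j => sigma j) x.

Definition Cdn (R : realType) (d n : nat) : {set 'S_n} :=
  [set sigma : 'S_n | `[< forall x : 'M[R]_(d, n),
      all_max_minors_pos (augmented x) ->
      all_max_minors_pos (augmented (permute_cols sigma x)) >] ].

(* S_{n/2} x S_{n/2}: permutations preserving the parity of indices. *)
Definition SS (n : nat) : {set 'S_n} :=
  [set sigma : 'S_n | [forall i : 'I_n, odd (sigma i) == odd i]].

(* The order-reversing permutation i |-> n+1-i (0-based: i |-> n-1-i). *)
Definition srev (n : nat) : 'S_n := perm (@rev_ord_inj n).

Definition SSs (n : nat) : {set 'S_n} := (SS n * <[srev n]>)%g.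

(* Components of tau in S_{n/2} x S_{n/2}: omega acts on the 1-based even
   indices (0-based odd), pi on the 1-based odd indices (0-based even);
   each is extended by the identity, which does not change its sign. *)
Definition omega_part (n : nat) (tau : 'S_n) : 'S_n :=
  restr_perm [set i : 'I_n | odd i] tau.
Definition pi_part (n : nat) (tau : 'S_n) : 'S_n :=
  restr_perm [set i : 'I_n | ~~ odd i] tau.

(* phi((omega,pi) s^eps) = sgn(omega) sgn(pi) (-1)^eps, encoded as a parity bit
   (true = -1).  For sigma in SSs: eps = 0 iff sigma in SS, and then
   (omega,pi) = sigma s^eps. *)
Definition phi_odd (n : nat) (sigma : 'S_n) : bool :=
  let eps := sigma \notin SS n in
  let tau := if eps then (sigma * (srev n)^-1)%g else sigma in
  odd_perm (omega_part tau) (+) odd_perm (pi_part tau) (+) eps.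

Definition ker_phi (n : nat) : {set 'S_n} :=
  [set sigma in SSs n | ~~ phi_odd sigma].

(* Main.v *)
Require Import Defs.
From HB Require Import structures.
From mathcomp Require Import all_boot all_order all_algebra all_fingroup all_solvable.
From mathcomp Require Import boolp reals.
From mathcomp Require Import zify.
Set Implicit Arguments. Unset Strict Implicit. Unset Printing Implicit Defensive.
Import Order.TTheory GRing.Theory Num.Theory.
Section P1.
Local Open Scope ring_scope.

Definition par m n (h : 'I_m -> 'I_n) : bool :=
  \big[addb/false]_(i < m) \big[addb/false]_(j < m) ((i < j)%N && (h j < h i)%N).

Lemma sign_prod (R : numDomainType) (I : Type) (r : seq I) (P : pred I) (b : I -> bool) :
  \prod_(i <- r | P i) ((-1) ^+ b i : R) = (-1) ^+ (\big[addb/false]_(i <- r | P i) b i).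
Proof.
by elim/big_rec2: _ => // i x y _ ->; rewrite signr_addb.
Qed.

Lemma prod_sign (R : realDomainType) m (t : 'I_m -> R) : injective t ->
  (0 < \prod_(i < m) \prod_(j < m | (i < j)%N) (t j - t i)) =
  ~~ \big[addb/false]_(i < m) \big[addb/false]_(j < m) ((i < j)%N && (t j < t i)).
Proof.
move=> tI.
have E : forall i j : 'I_m, t j - t i = (-1) ^+ (t j < t i)%R * `|t j - t i|.
  move=> i j; case: (ltrP (t j) (t i)) => h /=.
    by rewrite expr1 mulN1r opprB.
  by rewrite expr0 mul1r.
under eq_bigr do under eq_bigr do rewrite E.
under eq_bigr do rewrite big_split /=.
rewrite big_split /=.
under eq_bigr do rewrite sign_prod.
rewrite sign_prod.
have pos : 0 < \prod_(i < m) \prod_(j < m | (i < j)%N) `|t j - t i|.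
  apply: prodr_gt0 => i _; apply: prodr_gt0 => j ij.
  rewrite normr_gt0 subr_eq0; apply/eqP => /tI eji.
  by move: ij; rewrite eji ltnn.
have -> : \big[addb/false]_(i < m) \big[addb/false]_(j < m | (i < j)%N) (t j < t i)
   = \big[addb/false]_(i < m) \big[addb/false]_(j < m) ((i < j)%N && (t j < t i)).
  by apply: eq_bigr => i _; rewrite big_mkcond; apply: eq_bigr => j _; case: ifP.
case: (\big[addb/false]_(i < m) _) => /=; last by rewrite expr0 mul1r.
by rewrite expr1 mulN1r oppr_gt0 ltNge ltW.
Qed.

Definition vdm (R : nzRingType) m (t : 'I_m -> R) : 'M[R]_m := \matrix_(i < m, j < m) t j ^+ i.

Lemma det_vdm (R : comNzRingType) m (t : 'I_m -> R) :
  \det (vdm t) = \prod_(i < m) \prod_(j < m | (i < j)%N) (t j - t i).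
Proof.
have -> : vdm t = Vandermonde m (\row_j t j) by apply/matrixP => i j; rewrite !mxE.
by rewrite det_Vandermonde; apply: eq_bigr => i _; apply: eq_bigr => j _; rewrite !mxE.
Qed.

Lemma par_odd m (s : 'S_m) : par s = odd_perm s.
Proof.
pose t (j : 'I_m) : rat := (j : nat)%:R.
have tI : injective t by move=> i j /eqP; rewrite /t eqr_nat => /eqP /val_inj.
have ts : injective (fun j => t (s j)) by move=> i j /tI /perm_inj.
have h1 := prod_sign tI.
have h2 := prod_sign ts.
have pos : 0 < \det (vdm t).
  rewrite det_vdm h1; apply/negP => /=.
  rewrite big1 // => i _; rewrite big1 // => j _.
  by rewrite /t ltr_nat; case: ltnP => //= /ltnW; rewrite leqNgt => /negbTE ->.
have : \det (vdm (fun j => t (s j))) = (-1) ^+ s * \det (vdm t).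
  have -> : vdm (fun j => t (s j)) = col_perm s (vdm t) by apply/matrixP => i j; rewrite !mxE.
  by rewrite col_permE det_mulmx det_perm odd_permV mulrC.
rewrite det_vdm => E.
have : (0 < \det (vdm (fun j => t (s j)))) = ~~ par s.
  rewrite det_vdm h2 /par; congr (~~ _); apply: eq_bigr => i _; apply: eq_bigr => j _.
  by rewrite /t ltr_nat.
rewrite det_vdm E; case: (odd_perm s) => /=.
  rewrite expr1 mulN1r oppr_gt0 ltNge ltW //=.
  by case: (par s).
by rewrite expr0 mul1r pos; case: (par s).
Qed.

End P1.
Section P2.
Local Open Scope ring_scope.

Definition incr m n (f : 'I_m -> 'I_n) := forall i j : 'I_m, (i < j)%N -> (f i < f j)%N.

Lemma incr_lt m n (f : 'I_m -> 'I_n) : incr f -> forall i j, (f i < f j)%N = (i < j)%N.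
Proof.
move=> fI i j; case: (ltnP i j) => [/fI //|]; rewrite leq_eqVlt => /orP [/eqP/val_inj -> | /fI h].
  by rewrite ltnn.
by apply/negbTE; rewrite -leqNgt ltnW.
Qed.

Lemma enum_sorted n (A : {set 'I_n}) : sorted (fun x y : 'I_n => (x < y)%N) (enum A).
Proof.
rewrite /enum_mem; apply: sorted_filter; first by move=> x y z; apply: ltn_trans.
by have := iota_ltn_sorted 0 n; rewrite -val_enum_ord sorted_map enumT.
Qed.

Lemma sort_fun n m (A : {set 'I_n}) (x0 : 'I_n) : #|A| = m.+1 ->
  exists g : 'I_m.+1 -> 'I_n, exists idx : 'I_n -> 'I_m.+1,
    [/\ incr g, forall i, g i \in A & forall x, x \in A -> g (idx x) = x].
Proof.
move=> cA.
have sz : size (enum A) = m.+1 by rewrite -cardE.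
exists (fun i => nth x0 (enum A) i), (fun x => insubd ord0 (index x (enum A))).
split.
- move=> i j ij; apply: (sorted_ltn_nth _ x0 (enum_sorted A)) => //.
    by move=> x y z; apply: ltn_trans.
  by rewrite inE sz.
  by rewrite inE sz.
- by move=> i; rewrite -mem_enum mem_nth // sz.
- move=> x xA; rewrite val_insubd.
  have -> : (index x (enum A) < m.+1)%N by rewrite -sz index_mem mem_enum.
  by rewrite nth_index // mem_enum.
Qed.

Lemma key (R : realDomainType) m n (M : 'M[R]_(m, n)) (h : 'I_m -> 'I_n) :
  all_max_minors_pos M -> injective h -> (0 < \det (colsub h M)) = ~~ par h.
Proof.
move=> Mpos hI.
case: m => [|m] in M h Mpos hI *.
  by rewrite det_mx00 ltr01 /par big_ord0.
set A := [set h i | i : 'I_m.+1].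
have cA : #|A| = m.+1 by rewrite card_imset // card_ord.
have [g [idx [gI gA gidx]]] := sort_fun (h ord0) cA.
pose r i := idx (h i).
have hr : forall i, g (r i) = h i by move=> i; rewrite /r gidx // imset_f.
have rI : injective r by move=> i j E; apply: hI; rewrite -hr E hr.
pose p := perm rI.
have E : colsub h M = col_perm p (colsub g M).
  by apply/matrixP => i j; rewrite !mxE permE hr.
have parE : par h = par p.
  rewrite /par; apply: eq_bigr => i _; apply: eq_bigr => j _.
  by rewrite !permE -!hr incr_lt.
rewrite E col_permE det_mulmx det_perm odd_permV parE par_odd.
have pos := Mpos g gI.
case: (odd_perm p) => /=.
  by rewrite expr1 mulrN1 oppr_gt0 ltNge ltW.
by rewrite expr0 mulr1.
Qed.

End P2.
Section P3.
Local Open Scope ring_scope.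

Definition pinv n (s : 'S_n) (I : {set 'I_n}) : bool :=
  \big[addb/false]_(x in I) \big[addb/false]_(y in I) ((x < y)%N && (s y < s x)%N).

Definition good d n (s : 'S_n) := forall I : {set 'I_n}, #|I| = d.+1 -> ~~ pinv s I.

Lemma incr_inj m n (f : 'I_m -> 'I_n) : incr f -> injective f.
Proof.
move=> fI i j E; apply: val_inj; case: (ltngtP i j) => // /fI; rewrite E ltnn //.
Qed.

Lemma pinv_par m n (s : 'S_n) (f : 'I_m -> 'I_n) : incr f ->
  pinv s [set f i | i : 'I_m] = par (fun i => s (f i)).
Proof.
move=> fI; rewrite /pinv /par big_imset /=; last by move=> i j _ _; apply: incr_inj.
apply: eq_bigr => i _; rewrite big_imset /=; last by move=> i' j _ _; apply: incr_inj.
by apply: eq_bigr => j _; rewrite incr_lt.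
Qed.

Lemma aug_perm (R : nzRingType) d n (s : 'S_n) (x : 'M[R]_(d, n)) :
  augmented (permute_cols s x) = colsub s (augmented x).
Proof.
apply/matrixP => i j; rewrite /augmented /permute_cols !mxE.
by case: splitP => k _; rewrite !mxE.
Qed.

Definition x0 (R : realDomainType) d n : 'M[R]_(d, n) := \matrix_(i < d, j < n) ((j : nat)%:R) ^+ i.+1.

Lemma x0_pos (R : realDomainType) d n : all_max_minors_pos (augmented (@x0 R d n)).
Proof.
move=> f fI.
have -> : colsub f (augmented (@x0 R d n)) = vdm (fun j => ((f j : nat)%:R : R)).
  apply/matrixP => i j; rewrite /augmented !mxE.
  case: splitP => k /=; first by rewrite ord1 => ->; rewrite !mxE expr0.
  by move=> ->; rewrite !mxE.
rewrite det_vdm; apply: prodr_gt0 => i _; apply: prodr_gt0 => j ij.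
by rewrite subr_gt0 ltr_nat; apply: fI.
Qed.

Lemma Cdn_good (R : realType) d n (s : 'S_n) : (0 < n)%N ->
  (s \in Cdn R d n) = `[< good d s >].
Proof.
move=> n0; rewrite inE; apply/asboolP/asboolP.
- move=> H I cI.
  have [g [idx [gI gA gidx]]] := sort_fun (Ordinal n0) cI.
  have -> : I = [set g i | i : 'I_d.+1].
    apply/setP => y; apply/idP/imsetP => [yI | [i _ ->] //].
    by exists (idx y); rewrite ?gidx.
  have hI : injective (fun i => s (g i)) by move=> i j /perm_inj /(incr_inj gI).
  rewrite pinv_par // -(@key _ _ _ (augmented (@x0 R d n)) _ (@x0_pos R d n) hI).
  have -> : colsub (fun i => s (g i)) (augmented (@x0 R d n)) = colsub g (colsub s (augmented (@x0 R d n))).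
    by apply/matrixP => i j; rewrite !mxE.
  have := H (@x0 R d n) (@x0_pos R d n) g gI.
  by rewrite aug_perm.
- move=> G x xpos f fI.
  rewrite aug_perm.
  have -> : colsub f (colsub s (augmented x)) = colsub (fun i => s (f i)) (augmented x).
    by apply/matrixP => i j; rewrite !mxE.
  rewrite key //; last by move=> i j /perm_inj /(incr_inj fI).
  rewrite -pinv_par //; apply: G.
  by rewrite card_imset ?card_ord //; apply: incr_inj.
Qed.

End P3.
Section P4.

Definition cross n (s : 'S_n) (x y : 'I_n) : bool := (x < y) (+) (s x < s y).

Lemma xor_lt (a b c e : nat) : a != b -> c != e ->
  ((a < b) && (e < c)) (+) ((b < a) && (c < e)) = (a < b) (+) (c < e).
Proof. by case: (ltngtP a b); case: (ltngtP c e). Qed.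

Lemma pinvU1 n (s : 'S_n) (T : {set 'I_n}) x : x \notin T ->
  pinv s (x |: T) = pinv s T (+) \big[addb/false]_(y in T) cross s x y.
Proof.
move=> xT; rewrite /pinv (big_setU1 _ xT) (big_setU1 _ xT) /= ltnn /=.
have -> : \big[addb/false]_(i in T) \big[addb/false]_(y in x |: T) ((i < y) && (s y < s i))
  = \big[addb/false]_(i in T) (((i < x) && (s x < s i)) (+) \big[addb/false]_(y in T) ((i < y) && (s y < s i))).
  by apply: eq_bigr => z _; rewrite (big_setU1 _ xT).
rewrite big_split /= addbA addbC; congr (_ (+) _).
rewrite -big_split /=; apply: eq_bigr => y yT.
rewrite /cross xor_lt //.
  by apply/negP => /eqP /val_inj E; move: xT; rewrite E yT.
by apply/negP => /eqP /val_inj /perm_inj E; move: xT; rewrite E yT.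
Qed.

Lemma pinvT n (s : 'S_n) : pinv s [set: 'I_n] = odd_perm s.
Proof.
rewrite -par_odd /pinv /par; under eq_bigl do rewrite in_setT.
by apply: eq_bigr => i _; under eq_bigl do rewrite in_setT.
Qed.

Lemma odd_big (I : Type) (r : seq I) (P : pred I) (F : I -> nat) :
  odd (\sum_(i <- r | P i) F i) = \big[addb/false]_(i <- r | P i) odd (F i).
Proof. by elim/big_rec2: _ => // i x y _ <-; rewrite oddD. Qed.

Lemma sum_lt a n : \sum_(y < n) (a < y) = n - a.+1.
Proof.
elim: n => [|n IH]; first by rewrite big_ord0.
rewrite big_ord_recr /= IH; case: (ltnP a n) => h; lia.
Qed.

Lemma cross_sum n (s : 'S_n) (a : 'I_n) :
  \big[addb/false]_(y < n) cross s a y = odd (n - a.+1) (+) odd (n - (s a).+1).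
Proof.
rewrite /cross big_split /=; congr addb.
  by rewrite -sum_lt odd_big; apply: eq_big => // i _; rewrite oddb.
rewrite -sum_lt odd_big [RHS](reindex_inj (@perm_inj _ s)) /=.
by apply: eq_big => // i _; rewrite oddb.
Qed.

Lemma good_n1 d (s : 'S_d.+1) : good d s <-> ~~ odd_perm s.
Proof.
split=> [G | H I cI].
  by rewrite -pinvT; apply: G; rewrite cardsT card_ord.
have -> : I = [set: 'I_d.+1].
  by apply/eqP; rewrite eqEcard subsetT /= cardsT card_ord cI.
by rewrite pinvT.
Qed.

Lemma good_n2 d (s : 'S_d.+2) : ~~ odd d ->
  good d s <-> forall a : 'I_d.+2, odd (s a) = odd a (+) odd_perm s.
Proof.
move=> ev.
have E : forall a : 'I_d.+2, pinv s [set: 'I_d.+2] = pinv s ([set: 'I_d.+2] :\ a) (+) (odd a (+) odd (s a)).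
  move=> a; rewrite -{1}(setD1K (in_setT a)) pinvU1; last by rewrite !inE eqxx.
  congr (_ (+) _).
  rewrite -[RHS](_ : \big[addb/false]_(y < d.+2) cross s a y = _); last first.
    rewrite cross_sum !oddB ?ltn_ord //= negbK.
    by case: (odd d); case: (odd a); case: (odd (s a)).
  rewrite [RHS](bigD1 a) //= /cross !ltnn /=.
  by apply: eq_bigl => y; rewrite !inE andbT.
split=> [G a | H I cI].
  have cD : #|[set: 'I_d.+2] :\ a| = d.+1.
    by have := cardsD1 a [set: 'I_d.+2]; rewrite in_setT cardsT card_ord; case.
  have := G _ cD; have := E a; rewrite pinvT => ->.
  by case: (pinv _ _); case: (odd a); case: (odd (s a)).
have : #|~: I| == 1%N.
  by have := cardsC I; rewrite cI card_ord => E1; apply/eqP; lia.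
case/cards1P => a Ea.
have -> : I = [set: 'I_d.+2] :\ a by rewrite setTD -Ea setCK.
have := E a; rewrite pinvT H.
by case: (odd_perm s); case: (odd a); case: (pinv _ _).
Qed.

End P4.
Section P5.

Lemma srevE n (a : 'I_n) : srev n a = rev_ord a.
Proof. by rewrite /srev permE. Qed.

Lemma srevK n : (srev n * srev n = 1)%g.
Proof. by apply/permP => a; rewrite permM !srevE rev_ordK perm1. Qed.

Lemma srevV n : ((srev n)^-1 = srev n)%g.
Proof. by rewrite -{1}(mulg1 ((srev n)^-1)%g) -srevK mulKg. Qed.

Lemma srev_exp n k : ((srev n) ^+ k = if odd k then srev n else 1)%g.
Proof.
elim: k => [|k IH]; first by rewrite expg0.
rewrite expgS IH /=; case: (odd k) => /=; by rewrite ?srevK ?mulg1.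
Qed.

Lemma mem_srev n (y : 'S_n) : (y \in <[srev n]>)%g = (y == 1%g) || (y == srev n).
Proof.
apply/cycleP/orP => [[k ->] | [/eqP -> | /eqP ->]].
- by rewrite srev_exp; case: (odd k); [right | left].
- by exists 0%N.
- by exists 1%N.
Qed.

Lemma odd_srev d (a : 'I_d.+2) : ~~ odd d -> odd (srev d.+2 a) = ~~ odd a.
Proof.
move=> ev; rewrite srevE /= oddB ?ltn_ord //= negbK.
by move: ev; case: (odd d); case: (odd a).
Qed.

Lemma odd_perm_srev d : ~~ odd d -> odd_perm (srev d.+2) = ~~ odd d./2.
Proof.
move=> ev; rewrite -pinvT /pinv.
under eq_bigl do rewrite in_setT.
under eq_bigr do under eq_bigl do rewrite in_setT.
have -> : \big[addb/false]_(i < d.+2) \big[addb/false]_(j < d.+2) ((i < j)%N && (srev d.+2 j < srev d.+2 i)%N)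
   = \big[addb/false]_(i < d.+2) \big[addb/false]_(j < d.+2) (i < j)%N.
  apply: eq_bigr => i _; apply: eq_bigr => j _; rewrite !srevE /=.
  have := ltn_ord i; have := ltn_ord j; case: (ltnP i j) => h //= *; lia.
have -> : \big[addb/false]_(i < d.+2) \big[addb/false]_(j < d.+2) (i < j)%N
   = odd (\sum_(i < d.+2) \sum_(j < d.+2) (i < j)).
  rewrite odd_big; apply: eq_bigr => i _; rewrite odd_big; apply: eq_bigr => j _.
  by rewrite oddb.
under eq_bigr do rewrite sum_lt.
rewrite (reindex_inj (@rev_ord_inj _)) /=.
have -> : \sum_(j < d.+2) (d.+2 - (d.+2 - j.+1).+1) = \sum_(j < d.+2) j.
  by apply: eq_bigr => j _; have := ltn_ord j; lia.
rewrite -(big_mkord xpredT (fun j => j)) bin2_sum bin2.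
have [k ->] : exists k, d = k.*2 by exists d./2; rewrite -[LHS](odd_double_half d) (negbTE ev).
rewrite doubleK.
have -> : (k.*2.+2 * (k.*2.+2).-1) = ((k.+1 * k.*2.+1)).*2 by rewrite /=; lia.
by rewrite doubleK oddM /= odd_double /=; case: (odd k).
Qed.

Definition SSp n (s : 'S_n) := forall a, odd (s a) = odd a.

Lemma SSP n (s : 'S_n) : (s \in SS n) = `[< SSp s >].
Proof.
rewrite inE; apply/forallP/asboolP => [H a | H a]; first by apply/eqP.
by rewrite H.
Qed.

Lemma omega_pi n (t : 'S_n) : t \in SS n ->
  odd_perm (omega_part t) (+) odd_perm (pi_part t) = odd_perm t.
Proof.
rewrite SSP => /asboolP tS.
have N1 : t \in 'N([set i : 'I_n | odd i] | 'P)%g.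
  by apply/astabsP => x; rewrite !inE /= tS.
have N2 : t \in 'N([set i : 'I_n | ~~ odd i] | 'P)%g.
  by apply/astabsP => x; rewrite !inE /= tS.
suff E : t = (omega_part t * pi_part t)%g by rewrite {3}E odd_permM.
apply/permP => x; rewrite permM.
case: (boolP (odd x)) => ox.
- rewrite /omega_part (restr_permE N1) ?inE //.
  by rewrite /pi_part (out_perm (restr_perm_on _ _)) // inE negbK tS.
- rewrite /omega_part (@out_perm _ _ _ x (restr_perm_on _ _)) ?inE //.
  by rewrite /pi_part (restr_permE N2) ?inE.
Qed.

End P5.
Section P6.

Definition fl n (s : 'S_n) := forall a, odd (s a) = odd a (+) odd_perm s.

Lemma mul_srevE n (t : 'S_n) a : (t * srev n)%g a = srev n (t a).
Proof. by rewrite permM. Qed.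

Lemma case_ii d (s : 'S_d.+2) : ~~ odd d -> ~~ odd d./2 ->
  (s \in (('Alt_('I_d.+2) :&: SS d.+2) * <[srev d.+2]>)%g) = `[< fl s >].
Proof.
move=> ev ev2; have osr := odd_perm_srev ev; rewrite (negbTE ev2) /= in osr.
apply/idP/asboolP.
- case/mulsgP => t u; rewrite inE Alt_even SSP => /andP [te /asboolP tS].
  rewrite mem_srev => /orP [] /eqP -> -> a.
    by rewrite mulg1 tS (negbTE te) addbF.
  by rewrite mul_srevE odd_srev // tS odd_permM (negbTE te) osr /= addbT.
- move=> F; case E: (odd_perm s).
  + apply/mulsgP; exists (s * srev d.+2)%g (srev d.+2); last by rewrite -mulgA srevK mulg1.
      rewrite inE Alt_even SSP odd_permM E osr /=; apply/asboolP => a.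
      by rewrite mul_srevE odd_srev // F E addbT negbK.
    by rewrite cycle_id.
  + apply/mulsgP; exists s 1%g; last by rewrite mulg1.
      by rewrite inE Alt_even SSP E /=; apply/asboolP => a; rewrite F E addbF.
    by rewrite group1.
Qed.

Lemma notSS d (s : 'S_d.+2) : ~~ odd d -> (forall a, odd (s a) = ~~ odd a) -> s \notin SS d.+2.
Proof.
move=> ev H; rewrite SSP; apply/asboolP => /(_ ord0); rewrite H.
by case: (odd _).
Qed.

Lemma case_iii d (s : 'S_d.+2) : ~~ odd d -> odd d./2 ->
  (s \in ker_phi d.+2) = `[< fl s >].
Proof.
move=> ev od2; have osr := odd_perm_srev ev; rewrite od2 /= in osr.
rewrite /ker_phi inE /SSs /phi_odd /=.
apply/idP/asboolP.
- case/andP => /mulsgP [t u tS]; rewrite mem_srev => /orP [] /eqP -> ->.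
    rewrite mulg1 tS /= addbF omega_pi // => te a.
    by move: tS; rewrite SSP => /asboolP ->; move: te; case: (odd_perm _) => // _; rewrite addbF.
  have sfl : forall a, odd ((t * srev d.+2)%g a) = ~~ odd a.
    by move=> a; rewrite mul_srevE odd_srev //; move: tS; rewrite SSP => /asboolP ->.
  rewrite (negbTE (notSS ev sfl)) /= srevV -mulgA srevK mulg1 omega_pi // addbT negbK.
  by move=> to a; rewrite sfl odd_permM to osr /= addbT.
- move=> F; case E: (odd_perm s).
  + have sfl : forall a, odd (s a) = ~~ odd a by move=> a; rewrite F E addbT.
    have tS : (s * (srev d.+2)^-1)%g \in SS d.+2.
      by rewrite SSP srevV; apply/asboolP => a; rewrite mul_srevE odd_srev // sfl negbK.
    rewrite (negbTE (notSS ev sfl)) /= omega_pi // odd_permM odd_permV E osr /= andbT.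
    apply/mulsgP; exists (s * (srev d.+2)^-1)%g (srev d.+2) => //; first by rewrite cycle_id.
    by rewrite mulgKV.
  + have sS : s \in SS d.+2 by rewrite SSP; apply/asboolP => a; rewrite F E addbF.
    rewrite sS /= addbF omega_pi // E andbT.
    by apply/mulsgP; exists s 1%g; rewrite ?group1 ?mulg1.
Qed.

End P6.
Section P7.

Definition rr n : 'S_n := perm (bij_inj (@ordS_bij n)).

Lemma modn_lt2 a n : a < n + n -> a %% n = if a < n then a else a - n.
Proof.
move=> h; case: ltnP => h2; first by rewrite modn_small.
by rewrite -{1}(subnK h2) modnDr modn_small //; lia.
Qed.

Lemma rr_exp n j (a : 'I_n) : val ((rr n ^+ j)%g a) = (a + j) %% n.
Proof.
elim: j => [|j IH]; first by rewrite expg0 perm1 addn0 modn_small.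
by rewrite expgSr permM /rr permE /= IH -addn1 modnDml addn1 addnS.
Qed.

Lemma rr_n n : (rr n ^+ n = 1)%g.
Proof. by apply/permP => a; apply: val_inj; rewrite rr_exp perm1 modnDr modn_small. Qed.

Lemma andb_bigr (I : Type) (r : seq I) (P : pred I) (b : bool) (F : I -> bool) :
  \big[addb/false]_(i <- r | P i) (b && F i) = b && \big[addb/false]_(i <- r | P i) F i.
Proof. by elim/big_rec2: _ => [|i x y _ ->]; [rewrite andbF | case: b]. Qed.

Lemma andb_bigl (I : Type) (r : seq I) (P : pred I) (b : bool) (F : I -> bool) :
  \big[addb/false]_(i <- r | P i) (F i && b) = (\big[addb/false]_(i <- r | P i) F i) && b.
Proof. by elim/big_rec2: _ => [//|i x y _ ->]; case: b; rewrite ?andbT ?andbF. Qed.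

Lemma big_true n (I : {set 'I_n}) : \big[addb/false]_(x in I) true = odd #|I|.
Proof. by rewrite -sum1_card odd_big. Qed.

Lemma prod_even n (I : {set 'I_n}) (A : pred 'I_n) : odd #|I| ->
  ~~ \big[addb/false]_(x in I) \big[addb/false]_(y in I) (A x && ~~ A y).
Proof.
move=> oI.
under eq_bigr do rewrite andb_bigr.
rewrite andb_bigl.
have : \big[addb/false]_(x in I) A x (+) \big[addb/false]_(y in I) ~~ A y = odd #|I|.
  by rewrite -big_split /= -big_true; apply: eq_bigr => x _; case: (A x).
rewrite oI; case: (\big[addb/false]_(x in I) A x); case: (\big[addb/false]_(x in I) ~~ A x) => //.
Qed.

Lemma rot_good d n j : ~~ odd d -> j < n -> good d (rr n ^+ j)%g.
Proof.
move=> ev jn I cI.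
have -> : pinv (rr n ^+ j)%g I = \big[addb/false]_(x in I) \big[addb/false]_(y in I) ((x < n - j) && ~~ (y < n - j)).
  apply: eq_bigr => x _; apply: eq_bigr => y _.
  rewrite !rr_exp !modn_lt2; try (have := ltn_ord x; have := ltn_ord y; lia).
  have := ltn_ord x; have := ltn_ord y; case: ifP; case: ifP => *; lia.
by apply: prod_even; rewrite cI /=.
Qed.

End P7.
Section P8.

Definition pairs n (I : {set 'I_n}) := \big[addb/false]_(x in I) \big[addb/false]_(y in I) (x < y).

Lemma pinv_srev n (s : 'S_n) (I : {set 'I_n}) :
  pinv (s * srev n)%g I = pairs I (+) pinv s I.
Proof.
rewrite /pinv /pairs -big_split /=; apply: eq_bigr => x _.
rewrite -big_split /=; apply: eq_bigr => y _.
rewrite !mul_srevE !srevE /=.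
have := ltn_ord (s x); have := ltn_ord (s y).
case: (ltngtP x y) => xy //= *.
have : (s x : nat) != s y.
  by apply/negP => /eqP /val_inj /perm_inj E; move: xy; rewrite E ltnn.
lia.
Qed.

Lemma pairs_ord m : \big[addb/false]_(i < m) \big[addb/false]_(j < m) (i < j) = odd 'C(m, 2).
Proof.
have -> : \big[addb/false]_(i < m) \big[addb/false]_(j < m) (i < j)
   = odd (\sum_(i < m) \sum_(j < m) (i < j)).
  rewrite odd_big; apply: eq_bigr => i _; rewrite odd_big; apply: eq_bigr => j _.
  by rewrite oddb.
under eq_bigr do rewrite sum_lt.
rewrite (reindex_inj (@rev_ord_inj _)) /=.
have -> : \sum_(j < m) (m - (m - j.+1).+1) = \sum_(j < m) j.
  by apply: eq_bigr => j _; have := ltn_ord j; lia.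
by rewrite -(big_mkord xpredT (fun j => j)) bin2_sum.
Qed.

Lemma pairs_odd n m (I : {set 'I_n}) : #|I| = m.+1 -> pairs I = odd 'C(m.+1, 2).
Proof.
move=> cI.
have : (0 < #|I|)%N by rewrite cI.
rewrite card_gt0 => /set0Pn [x0 _].
have [g [idx [gI gA gidx]]] := sort_fun x0 cI.
have -> : I = [set g i | i : 'I_m.+1].
  apply/setP => y; apply/idP/imsetP => [yI | [i _ ->] //].
  by exists (idx y); rewrite ?gidx.
rewrite -pairs_ord /pairs big_imset /=; last by move=> i j _ _; apply: incr_inj.
apply: eq_bigr => i _; rewrite big_imset /=; last by move=> i' j _ _; apply: incr_inj.
by apply: eq_bigr => j _; rewrite incr_lt.
Qed.

Lemma refl_pinv d n j (I : {set 'I_n}) : ~~ odd d -> j < n -> #|I| = d.+1 ->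
  pinv (rr n ^+ j * srev n)%g I = odd d./2.
Proof.
move=> ev jn cI; rewrite pinv_srev (pairs_odd cI).
have := rot_good ev jn cI; case: (pinv _ _) => // _; rewrite addbF.
rewrite bin2odd /=; last by rewrite /= ev.
by rewrite oddM /= ev.
Qed.

End P8.
Section P9.

Lemma subset_card n (U : {set 'I_n}) k : k <= #|U| -> exists S : {set 'I_n}, S \subset U /\ #|S| = k.
Proof.
move=> kU; exists [set x in take k (enum U)]; split.
  by apply/subsetP => x; rewrite inE => /mem_take; rewrite mem_enum.
rewrite cardsE; move/card_uniqP: (take_uniq k (enum_uniq (mem U))) => ->.
by rewrite size_takel // -cardE.
Qed.

Lemma cardC4 n d (x y z w : 'I_n) : d.+3 <= n -> d.-1 <= #|~: (x |: (y |: (z |: [set w])))|.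
Proof.
move=> dn; have := cardsC (x |: (y |: (z |: [set w]))); rewrite card_ord !cardsU1 cards1.
move: (x \notin _) (y \notin _) (z \notin _) => b1 b2 b3; lia.
Qed.

Lemma adjacent d n (s : 'S_n) (a b : 'I_n) : ~~ odd d -> (0 < d) -> (d.+3 <= n) -> good d s ->
  (b : nat) = a.+1 -> ((s b : nat) == (s a).+1 %% n) || ((s a : nat) == (s b).+1 %% n).
Proof.
move=> ev d0 dn G ab.
pose btw y := (s a < s y) (+) (s b < s y).
have K : forall T : {set 'I_n}, a \notin T -> b \notin T -> #|T| = d ->
    ~~ \big[addb/false]_(y in T) btw y.
  move=> T aT bT cT.
  have ca : #|a |: T| = d.+1 by rewrite cardsU1 aT cT.
  have cb : #|b |: T| = d.+1 by rewrite cardsU1 bT cT.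
  have := G _ ca; have := G _ cb; rewrite !pinvU1 //.
  have -> : \big[addb/false]_(y in T) btw y =
      \big[addb/false]_(y in T) cross s a y (+) \big[addb/false]_(y in T) cross s b y.
    rewrite -big_split /=; apply: eq_bigr => y yT.
    have hab : (a < y) = (b < y).
      have yb : (y : nat) != b by apply/negP => /eqP /val_inj E; move: bT; rewrite -E yT.
      have ya : (y : nat) != a by apply/negP => /eqP /val_inj E; move: aT; rewrite -E yT.
      lia.
    by rewrite /cross /btw hab; case: (b < y); case: (s a < s y); case: (s b < s y).
  by case: (pinv s T); case: (\big[addb/false]_(y in T) cross s a y);
     case: (\big[addb/false]_(y in T) cross s b y).
apply: contraT; rewrite negb_or => /andP [n1 n2].
have n0 : 0 < n by lia.
have sab : (s a : nat) != s b.
  by apply/negP => /eqP /val_inj /perm_inj E; move: ab; rewrite E; lia.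
have san := ltn_ord (s a); have sbn := ltn_ord (s b).
rewrite !modn_lt2 in n1 n2; try lia.
have H1 : (minn (s a) (s b)).+1 < maxn (s a) (s b).
  by move: n1 n2; case: ifP; case: ifP => *; lia.
have H2 : (0 < minn (s a) (s b)) || ((maxn (s a) (s b)).+1 < n).
  by move: n1 n2; case: ifP; case: ifP => *; lia.
have [v [vb va vb']] : exists v : 'I_n,
    [/\ (s a < v) (+) (s b < v), (v : nat) != s a & (v : nat) != s b].
  have vlt : (minn (s a) (s b)).+1 < n by lia.
  by exists (Ordinal vlt) => /=; split; lia.
have [w [wb wa wb']] : exists w : 'I_n,
    [/\ ~~ ((s a < w) (+) (s b < w)), (w : nat) != s a & (w : nat) != s b].
  case/orP: H2 => h.
    by exists (Ordinal n0) => /=; split; lia.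
  by exists (Ordinal h) => /=; split; lia.
pose c := ((s^-1)%g v); pose c' := ((s^-1)%g w).
have sc : s c = v by rewrite /c permKV.
have sc' : s c' = w by rewrite /c' permKV.
have btc : btw c by rewrite /btw sc.
have btc' : ~~ btw c' by rewrite /btw sc'.
have neq : forall x y : 'I_n, (s x : nat) != s y -> x != y.
  by move=> x y; apply: contra => /eqP ->.
have ca : c != a by apply: neq; rewrite sc.
have cb : c != b by apply: neq; rewrite sc.
have c'a : c' != a by apply: neq; rewrite sc'.
have c'b : c' != b by apply: neq; rewrite sc'.
have cc' : c != c' by apply/negP => /eqP E; move: btc btc'; rewrite E => ->.
pose F := a |: (b |: (c |: [set c'])).
have cU : d.-1 <= #|~: F| by apply: cardC4.
have [S [SU cS]] := subset_card cU.
have notS : forall x, x \in F -> x \notin S.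
  by move=> x xF; apply/negP => /(subsetP SU); rewrite inE xF.
have aS : a \notin S by apply: notS; rewrite !inE eqxx.
have bS : b \notin S by apply: notS; rewrite !inE eqxx ?orbT.
have cS' : c \notin S by apply: notS; rewrite !inE eqxx ?orbT.
have c'S : c' \notin S by apply: notS; rewrite !inE eqxx ?orbT.
have K1 := K (c |: S).
have K2 := K (c' |: S).
rewrite !inE !negb_or eq_sym ca aS eq_sym cb bS cardsU1 cS' cS /= in K1.
rewrite !inE !negb_or eq_sym c'a aS eq_sym c'b bS cardsU1 c'S cS /= in K2.
have d1 : (1 + d.-1)%N = d by rewrite add1n prednK.
move: (K1 isT isT d1) (K2 isT isT d1); rewrite !(big_setU1 _ cS') !(big_setU1 _ c'S) btc (negbTE btc') /=.
by case: (\big[addb/false]_(y in S) btw y).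
Qed.

End P9.
Section P10.

Lemma modS_inj n x y : x < n -> y < n -> x.+1 %% n = y.+1 %% n -> x = y.
Proof. move=> xn yn; rewrite !modn_lt2; try lia; case: ifP; case: ifP => *; lia. Qed.

Lemma modS_refl n x y : x < n -> y < n ->
  (y == x.+1 %% n) = ((n - x.+1) == (n - y.+1).+1 %% n).
Proof. move=> xn yn; rewrite !modn_lt2; try lia; case: ifP; case: ifP => *; lia. Qed.

Lemma modS_mod n x : (x %% n).+1 %% n = x.+1 %% n.
Proof. by rewrite -addn1 modnDml addn1. Qed.

Definition adjP n (s : 'S_n) := forall a b : 'I_n, (b : nat) = a.+1 ->
  ((s b : nat) == (s a).+1 %% n) || ((s a : nat) == (s b).+1 %% n).

Lemma rot_form n (s : 'S_n) (a0 a1 : 'I_n) : (a0 : nat) = 0 -> (a1 : nat) = 1 ->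
  adjP s -> (s a1 : nat) = (s a0).+1 %% n -> s = (rr n ^+ (s a0))%g.
Proof.
move=> a00 a11 adj h01.
set j := (s a0 : nat).
have jn : j < n by apply: ltn_ord.
have P : forall i, i.+1 < n ->
    (forall x : 'I_n, (x : nat) = i -> (s x : nat) = (i + j) %% n) /\
    (forall x : 'I_n, (x : nat) = i.+1 -> (s x : nat) = (i.+1 + j) %% n).
  elim => [_ | i IH lt].
    split=> x /= x0.
      by rewrite (_ : x = a0) ?add0n ?modn_small //; apply: val_inj; rewrite /= x0 a00.
    by rewrite (_ : x = a1) ?h01 ?add1n //; apply: val_inj; rewrite /= x0 a11.
  have [IH1 IH2] := IH (ltnW lt).
  split => // x xi.
  have lt1 : i.+1 < n by apply: ltnW.
  have lt0 : i < n by apply: ltnW.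
  pose y := Ordinal lt1; pose z := Ordinal lt0.
  have sy : (s y : nat) = (i.+1 + j) %% n by apply: IH2.
  have sz : (s z : nat) = (i + j) %% n by apply: IH1.
  case/orP: (adj y x xi) => /eqP E.
    by rewrite E sy modS_mod addSn.
  have : (s x).+1 %% n = (s z).+1 %% n.
    by rewrite -E sy sz modS_mod addSn.
  move/modS_inj => /(_ (ltn_ord _) (ltn_ord _)) /val_inj /perm_inj xz.
  by move: xi; rewrite xz /=; lia.
apply/permP => x; apply: val_inj; rewrite /= rr_exp.
case: (ltnP x.+1 n) => h.
  by rewrite ((P x h).1 x erefl) addnC.
have n1 : (n.-2).+1 < n by have := ltn_ord a1; lia.
have xe : (x : nat) = (n.-2).+1 by have := ltn_ord x; have := ltn_ord a1; lia.
by rewrite ((P _ n1).2 x xe) -xe addnC.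
Qed.

Lemma adjP_srev n (s : 'S_n) : adjP s -> adjP (s * srev n)%g.
Proof.
move=> adj a b ab; rewrite !mul_srevE !srevE /=.
have := ltn_ord (s a); have := ltn_ord (s b) => hb ha.
rewrite -modS_refl // -modS_refl // orbC.
by apply: adj.
Qed.

Lemma good_dihedral d n (s : 'S_n) : ~~ odd d -> (0 < d) -> (d.+3 <= n) -> good d s ->
  exists2 j, j < n & (s = (rr n ^+ j)%g \/ s = (rr n ^+ j * srev n)%g).
Proof.
move=> ev d0 dn G.
have adj : adjP s by move=> a b ab; apply: (adjacent ev d0 dn G ab).
have n0 : 0 < n by lia.
have n1 : 1 < n by lia.
pose a0 := Ordinal n0; pose a1 := Ordinal n1.
case/orP: (adj a0 a1 erefl) => /eqP E.
  by exists (s a0) => //; left; apply: (rot_form (a0 := a0) (a1 := a1)).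
have adj' := adjP_srev adj.
have E' : ((s * srev n)%g a1 : nat) = ((s * srev n)%g a0).+1 %% n.
  apply/eqP; rewrite !mul_srevE !srevE /= -modS_refl //; first by apply/eqP.
have := rot_form (a0 := a0) (a1 := a1) erefl erefl adj' E' => E2.
exists ((s * srev n)%g a0) => //; right.
by rewrite -E2 -mulgA srevK mulg1.
Qed.

End P10.
Section P11.

Lemma permute_cols1 (R : nzRingType) d n (x : 'M[R]_(d, n)) : permute_cols 1%g x = x.
Proof. by apply/matrixP => i j; rewrite /permute_cols !mxE perm1. Qed.

Lemma permute_colsM (R : nzRingType) d n (s t : 'S_n) (x : 'M[R]_(d, n)) :
  permute_cols (s * t)%g x = permute_cols s (permute_cols t x).
Proof. by apply/matrixP => i j; rewrite /permute_cols !mxE permM. Qed.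

Lemma Cdn_group (R : realType) d n : group_set (Cdn R d n).
Proof.
apply/group_setP; split.
  by rewrite inE; apply/asboolP => x; rewrite permute_cols1.
move=> s t; rewrite !inE => /asboolP Hs /asboolP Ht; apply/asboolP => x xp.
by rewrite permute_colsM; apply: Hs; apply: Ht.
Qed.

Lemma order_rr n : 0 < n -> #[rr n]%g = n.
Proof.
move=> n0; apply/eqP; rewrite eqn_dvd order_dvdn rr_n eqxx /=.
have := expg_order (rr n) => /permP /(_ (Ordinal n0)) /(congr1 val).
by rewrite rr_exp perm1 /= add0n => E; rewrite /dvdn E.
Qed.

Lemma srev_notin n : 2 < n -> srev n \notin <[rr n]>%g.
Proof.
move=> n2; apply/cycleP => [[k /permP E]].
have n0 : 0 < n by lia.
have n1 : 1 < n by lia.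
have := E (Ordinal n0); have := E (Ordinal n1).
move=> /(congr1 val) + /(congr1 val).
rewrite !srevE !rr_exp /= add0n => E1 E0.
move: E1; rewrite -modS_mod -E0 modn_lt2; try lia.
case: ifP => *; lia.
Qed.

Lemma order2 (gT : finGroupType) (x : gT) : (x * x = 1)%g -> x != 1%g -> #[x]%g = 2.
Proof.
move=> xx x1.
have : (#[x] %| 2)%g by rewrite order_dvdn expgS expg1 xx.
have := order_gt0 x; rewrite -order_eq1 in x1.
by move: x1; case: #[x]%g => [|[|[|k]]] //= _ _; rewrite dvdn2 /= ?odd_double.
Qed.

Lemma Cdn_cyclic (R : realType) d n : ~~ odd d -> 0 < d -> d.+3 <= n -> odd d./2 ->
  Cdn R d n = <[rr n]>%g.
Proof.
move=> ev d0 dn od2; have n0 : 0 < n by lia.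
apply/setP => s; rewrite Cdn_good //; apply/asboolP/idP => [G | ].
  have [j jn [-> | E]] := good_dihedral ev d0 dn G; first by rewrite mem_cycle.
  have [I [_ cI]] : exists I : {set 'I_n}, I \subset setT /\ #|I| = d.+1.
    by apply: subset_card; rewrite cardsT card_ord; lia.
  by have := G I cI; rewrite E (refl_pinv ev jn cI) od2.
case/cycleP => k ->; rewrite -(expg_mod _ (rr_n n)).
by apply: rot_good => //; rewrite ltn_mod.
Qed.

Lemma Cdn_dihedral (R : realType) d n : ~~ odd d -> 0 < d -> d.+3 <= n -> ~~ odd d./2 ->
  Cdn R d n = <<[set srev n; (rr n * srev n)%g]>>%g.
Proof.
move=> ev d0 dn od2; have n0 : 0 < n by lia.
pose CG := Group (Cdn_group R d n).
have rg : forall j, j < n -> (rr n ^+ j * srev n)%g \in Cdn R d n.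
  move=> j jn; rewrite Cdn_good //; apply/asboolP => I cI.
  by rewrite (refl_pinv ev jn cI) (negbTE od2).
apply/eqP; rewrite eqEsubset; apply/andP; split.
  apply/subsetP => s; rewrite Cdn_good // => /asboolP G.
  have rH : rr n \in <<[set srev n; (rr n * srev n)%g]>>%g.
    have E0 : rr n = ((rr n * srev n) * srev n)%g by rewrite -mulgA srevK mulg1.
    by rewrite {1}E0 groupM // mem_gen // !inE eqxx ?orbT.
  have [j jn [-> | ->]] := good_dihedral ev d0 dn G.
    by rewrite groupX.
  by rewrite groupM ?groupX // mem_gen // !inE eqxx.
have -> : Cdn R d n = CG by [].
rewrite gen_subG; apply/subsetP => x /set2P [] ->.
  by have := rg 0 n0; rewrite expg0 mul1g.
have n1 : 1 < n by lia.
by have := rg 1 n1; rewrite expg1.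
Qed.

End P11.
Section P12.

Lemma rrE n (a : 'I_n) : (rr n a : nat) = a.+1 %% n.
Proof. by have := @rr_exp n 1 a; rewrite expg1 addn1. Qed.

Lemma card_dih (R : realType) d n : ~~ odd d -> 0 < d -> d.+3 <= n -> ~~ odd d./2 ->
  #|<<[set srev n; (rr n * srev n)%g]>>%g| = 2 * n.
Proof.
move=> ev d0 dn od2; have n0 : 0 < n by lia.
have HC := Cdn_dihedral R ev d0 dn od2.
set H := <<[set srev n; (rr n * srev n)%g]>>%g in HC *.
have ub : #|H| <= 2 * n.
  pose F := fun p : bool * 'I_n => if p.1 then (rr n ^+ p.2 * srev n)%g else (rr n ^+ p.2)%g.
  apply: (@leq_trans #|[set F p | p in [set: bool * 'I_n]]|).
    apply: subset_leq_card; apply/subsetP => s; rewrite -HC Cdn_good // => /asboolP G.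
    have [j jn [-> | ->]] := good_dihedral ev d0 dn G.
      by apply/imsetP; exists (false, Ordinal jn); rewrite ?inE.
    by apply/imsetP; exists (true, Ordinal jn); rewrite ?inE.
  by apply: leq_trans (leq_imset_card _ _) _; rewrite cardsT card_prod card_bool card_ord.
have rH : rr n \in H.
  have E0 : rr n = ((rr n * srev n) * srev n)%g by rewrite -mulgA srevK mulg1.
  by rewrite {1}E0 groupM // mem_gen // !inE eqxx ?orbT.
have sH : srev n \in H by rewrite mem_gen // !inE eqxx.
have sub : <[rr n]>%g \subset H by rewrite cycle_subG.
have lb : n < #|H|.
  rewrite -{1}(order_rr n0) orderE; apply: proper_card.
  rewrite properE sub /=; apply/negP => /subsetP /(_ _ sH).
  by apply/negP; apply: srev_notin; lia.
have := cardSg sub; rewrite -orderE order_rr // => /dvdnP [k Hk].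
rewrite Hk in ub lb *.
by case: k Hk ub lb => [|[|[|k]]] Hk ub lb; nia.
Qed.

End P12.

Theorem proposition3p10 (R : realType) (d n : nat) :
  (0 < d)%N -> ~~ odd d -> (d.+1 <= n)%N ->
  [/\ (n = d.+1 -> Cdn R d n = ('Alt_('I_n))%g),
      (n = d.+2 -> ~~ odd d./2 ->
         Cdn R d n = (('Alt_('I_n) :&: SS n) * <[srev n]>)%g),
      (n = d.+2 -> odd d./2 -> Cdn R d n = ker_phi n),
      ((d.+3 <= n)%N -> ~~ odd d./2 -> (Cdn R d n \isog 'D_(2 * n))%g) &
      ((d.+3 <= n)%N -> odd d./2 -> (Cdn R d n \isog Zp n)%g)].
Proof.
move=> d0 ev dn; have n0 : (0 < n)%N by lia.
split.
- move=> E; subst n; apply/setP => s; rewrite Cdn_good // Alt_even.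
  by apply/asboolP/idP => /good_n1.
- move=> E od2; subst n; apply/setP => s; rewrite Cdn_good // case_ii //.
  by apply/asboolP/asboolP => /(good_n2 s ev).
- move=> E od2; subst n; apply/setP => s; rewrite Cdn_good // case_iii //.
  by apply/asboolP/asboolP => /(good_n2 s ev).
- move=> d3 od2; rewrite (Cdn_dihedral R ev d0 d3 od2) -(card_dih R ev d0 d3 od2).
  apply: involutions_gen_dihedral.
  + apply: order2; first by apply: srevK.
    apply/eqP => /permP /(_ (Ordinal n0)) /(congr1 val); rewrite srevE perm1 /=; lia.
  + apply: order2.
      apply/permP => a; apply: val_inj; rewrite permM !mul_srevE !srevE /= !rrE /= perm1.
      rewrite rrE; have := ltn_ord a; rewrite (@modn_lt2 a.+1); last by have := ltn_ord a; lia.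
      case: ifP => h1 h2; rewrite modn_lt2; try lia; case: ifP => *; lia.
    apply/eqP => /permP /(_ (Ordinal n0)) /(congr1 val).
    rewrite mul_srevE srevE perm1 /= rrE /= modn_small; lia.
  + apply/eqP => /(congr1 (fun x => x * srev n)%g); rewrite srevK -mulgA srevK mulg1.
    move/permP => /(_ (Ordinal n0)) /(congr1 val); rewrite perm1 /= rrE /= modn_small; lia.
- move=> d3 od2; rewrite (Cdn_cyclic R ev d0 d3 od2) isog_sym.
  by have := Zp_isog (rr n); rewrite order_rr.
Qed.
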